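(* Let $r\in(1,2)$. Let $Z$ be a random variable with values in $\mathbb{N}$ and $X$ a nonnegative real random variable with $\mathbb{E}[X^r]+\mathbb{E}[Z^r]<+\infty$. Write $L_Z(\xi)=\mathbb{E}[e^{-\xi Z}]$ and $k_X(\xi)=\log\mathbb{E}[e^{-\xi X}]$. Then there is a positive constant $C=C(X)$, depending only on $X$ (and $r$), such that for all $\xi>0$ $$|L_Z(-k_X(\xi))-L_Z(\xi\mathbb{E}[X])|\,\xi^{-r}\le C(X)\big[1+\mathbb{E}[Z^r]\big].$$ *)

(* Defs.v *)
From HB Require Import structures.
From mathcomp Require Import all_boot all_order all_algebra.
From mathcomp Require Import all_classical all_reals all_analysis.
Set Implicit Arguments. Unset Strict Implicit. Unset Printing Implicit Defensive.
Import Order.TTheory GRing.Theory Num.Theory.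
Local Open Scope ring_scope.

(* Expectation of a real random variable (as a real number; used only for
   integrable / finite-moment variables). *)
Definition expect (R : realType) (d : measure_display) (T : measurableType d)
  (P : probability T R) (X : T -> R) : R :=
  fine (\int[P]_x (X x)%:E).

Definition laplace (R : realType) (d : measure_display) (T : measurableType d)
  (P : probability T R) (X : T -> R) (s : R) : R :=
  expect P (fun x => expR (- s * X x)).

Definition loglaplace (R : realType) (d : measure_display) (T : measurableType d)
  (P : probability T R) (X : T -> R) (s : R) : R :=
  ln (laplace P X s).

(* Main.v *)
Set Warnings "-notation-overridden,-ambiguous-paths,-notation-incompatible-prefix".
Require Import Defs.
From HB Require Import structures.
From mathcomp Require Import all_boot all_order all_algebra.
From mathcomp Require Import all_classical all_reals all_analysis.
From mathcomp Require Import ring lra measurable_realfun.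
Import Order.TTheory GRing.Theory Num.Theory.
Local Open Scope ring_scope.

Lemma expN_le2 (R : realType) (u : R) : 0 <= u -> expR (- u) <= 1 - u + u ^+ 2.
Proof.
move=> u0.
have h1 : 0 < 1 + u by lra.
have h : expR (- u) <= (1 + u)^-1.
  rewrite expRN lef_pV2 ?posrE ?expR_gt0 //; exact: expR_ge1Dx.
apply: (le_trans h).
rewrite -[(1+u)^-1]mul1r ler_pdivrMr //; nra.
Qed.

Lemma expN_ler (R : realType) (r u : R) : 1 < r -> r < 2 -> 0 <= u ->
  expR (- u) <= 1 - u + u `^ r.
Proof.
move=> r1 r2 u0.
have [u1|u1] := leP u 1.
  apply: (le_trans (@expN_le2 _ u u0)).
  rewrite lerD2l.
  have [->|upos] := eqVneq u 0.
    by rewrite expr0n /= powR_ge0.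
  have up : 0 < u by rewrite lt_def upos u0.
  rewrite -powR_mulrn //.
  apply: ger_powR; [by rewrite up u1 | by rewrite ltW].
have : u <= u `^ r by apply: le1r_powR; rewrite ltW.
have : expR (- u) <= 1.
  by rewrite -expR0 ler_expR; lra.
lra.
Qed.

Section Helpers.
Context (R : realType) (d : measure_display) (T : measurableType d) (P : probability T R).

Lemma Pint_bnd (f : T -> R) (k : R) : measurable_fun setT f ->
  (forall x, `|f x| <= k) -> P.-integrable setT (EFin \o f).
Proof.
move=> mf fk.
apply: (le_integrable _ (g := EFin \o cst k)).
- by [].
- exact/measurable_EFinP.
- move=> x _ /=; rewrite lee_fin.
  apply: (le_trans (fk x)); exact: ler_norm.
- exact: finite_measure_integrable_cst.
Qed.

Lemma Pint_nn (f : T -> R) : measurable_fun setT f -> (forall x, 0 <= f x) ->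
  (\int[P]_x (f x)%:E < +oo)%E -> P.-integrable setT (EFin \o f).
Proof.
move=> mf f0 fi; apply/integrableP; split; first exact/measurable_EFinP.
rewrite (eq_integral (fun x => (f x)%:E)) //.
by move=> x _ /=; rewrite ger0_norm.
Qed.

Lemma expect_R (f : T -> R) : expect P f = Rintegral P setT f.
Proof. by []. Qed.

Lemma Rint_cst (k : R) : Rintegral P setT (fun _ => k) = k.
Proof. rewrite Rintegral_cst // (_ : fine _ = 1) ?mulr1 //. exact: (congr1 fine (probability_setT P)). Qed.

Lemma Pint_D (f g : T -> R) : P.-integrable setT (EFin \o f) ->
  P.-integrable setT (EFin \o g) -> P.-integrable setT (EFin \o (fun x => f x + g x)).
Proof.
move=> fi gi; apply: (eq_integrable _ _ _ _ (integrableD _ fi gi)) => //=.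
Qed.

Lemma Pint_Z (f : T -> R) (k : R) : P.-integrable setT (EFin \o f) ->
  P.-integrable setT (EFin \o (fun x => k * f x)).
Proof.
move=> fi; apply: (eq_integrable _ _ _ _ (integrableZl _ k fi)) => //=.
Qed.

Lemma Pint_B (f g : T -> R) : P.-integrable setT (EFin \o f) ->
  P.-integrable setT (EFin \o g) -> P.-integrable setT (EFin \o (fun x => f x - g x)).
Proof.
move=> fi gi; apply: (eq_integrable _ _ _ _ (integrableB _ fi gi)) => //=.
Qed.

Lemma Pint_c (k : R) : P.-integrable setT (EFin \o (fun _ : T => k)).
Proof. exact: finite_measure_integrable_cst. Qed.

Lemma mexp (f : T -> R) (s : R) : measurable_fun setT f ->
  measurable_fun setT (fun t => expR (- s * f t)).
Proof.
move=> mf.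
exact: (measurableT_comp (@measurable_expR R) (measurableT_comp (mulrl_measurable (- s)) mf)).
Qed.

Lemma iexp (f : T -> R) (s : R) : measurable_fun setT f -> (forall t, 0 <= f t) ->
  0 <= s -> P.-integrable setT (EFin \o (fun t => expR (- s * f t))).
Proof.
move=> mf f0 s0; apply: (@Pint_bnd _ 1); first exact: mexp.
move=> t; rewrite ger0_norm ?expR_ge0 // -expR0 ler_expR mulNr oppr_le0.
exact: mulr_ge0.
Qed.

End Helpers.
Arguments Pint_bnd {R d T P f} k.
Arguments Pint_nn {R d T P f}.
Arguments expect_R {R d T P f}.
Arguments Rint_cst {R d T P} k.
Arguments Pint_D {R d T P f g}.
Arguments Pint_Z {R d T P f} k.
Arguments Pint_B {R d T P f g}.
Arguments Pint_c {R d T P} k.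
Arguments mexp {R d T f} s.
Arguments iexp {R d T} P {f} s.
Arguments expN_ler {R r u}.
Arguments expN_le2 {R u}.

Theorem lemmaA4 (R : realType) (r : R) (hr1 : 1 < r) (hr2 : r < 2)
  (d : measure_display) (T : measurableType d) (P : probability T R)
  (X : T -> R) (mX : measurable_fun setT X) (X_ge0 : forall t, 0 <= X t)
  (hXr : (\int[P]_t ((X t) `^ r)%:E < +oo)%E) :
  exists C : R, 0 < C /\
    forall (d' : measure_display) (T' : measurableType d')
           (Q : probability T' R) (Z : T' -> nat),
      measurable_fun setT (fun t => (Z t)%:R : R) ->
      (\int[Q]_t (((Z t)%:R : R) `^ r)%:E < +oo)%E ->
      forall xi : R, 0 < xi ->
        `| laplace Q (fun t => (Z t)%:R) (- loglaplace P X xi)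
           - laplace Q (fun t => (Z t)%:R) (xi * expect P X) | * xi `^ (- r)
        <= C * (1 + expect Q (fun t => ((Z t)%:R : R) `^ r)).
Proof.
set m := expect P X.
set M := expect P (fun t => X t `^ r).
have mXr : measurable_fun setT (fun t => X t `^ r).
  exact: (measurableT_comp (@measurable_powR R r) mX).
have iXr : P.-integrable setT (EFin \o (fun t => X t `^ r)).
  by apply: Pint_nn => // t; exact: powR_ge0.
have iX : P.-integrable setT (EFin \o X).
  apply: (le_integrable _ (g := EFin \o (fun t => 1 + X t `^ r))) => //.
  - exact/measurable_EFinP.
  - move=> t _ /=; rewrite lee_fin ger0_norm // ger0_norm; last first.
      by apply: addr_ge0 => //; exact: powR_ge0.
    have [t1|t1] := leP (X t) 1.
      by have := powR_ge0 (X t) r; lra.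
    have := @le1r_powR _ (X t) r (ltW t1) (ltW hr1); lra.
  - by apply: Pint_D => //; exact: finite_measure_integrable_cst.
have M0 : 0 <= M by apply: Rintegral_ge0 => t _; exact: powR_ge0.
exists (M + 1); split; first lra.
move=> d' T' Q Z mZ hZr xi xi0.
have iE := iexp P xi mX X_ge0 (ltW xi0).
have y_up : laplace P X xi <= 1 - xi * expect P X + xi `^ r * expect P (fun t => X t `^ r).
  rewrite /laplace expect_R.
  apply: (@le_trans _ _ (Rintegral P setT (fun t => (1 - xi * X t) + xi `^ r * X t `^ r))).
    apply: le_Rintegral => //.
      by apply: Pint_D; [apply: Pint_B; [exact: Pint_c| exact: Pint_Z]| exact: Pint_Z].
    move=> t _.
    have u0 : 0 <= xi * X t by apply: mulr_ge0 => //; exact: ltW.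
    have := expN_ler hr1 hr2 u0.
    by rewrite powRM ?mulNr //; exact: ltW.
  rewrite RintegralD //; last 2 first.
    by apply: Pint_B; [exact: Pint_c| exact: Pint_Z].
    exact: Pint_Z.
  rewrite RintegralB //; [|exact: Pint_c|exact: Pint_Z].
  by rewrite Rint_cst !RintegralZl.
have y_low : expR (- (xi * expect P X)) <= laplace P X xi.
  rewrite /laplace expect_R.
  set c := xi * expect P X.
  apply: (@le_trans _ _ (Rintegral P setT
     (fun t => expR (- c) * (1 + c) - (expR (- c) * xi) * X t))).
    rewrite RintegralB //; [|exact: Pint_c|exact: Pint_Z].
    rewrite Rint_cst RintegralZl // -expect_R -/c.
    by rewrite /c; lra.
  apply: le_Rintegral => //.
    by apply: Pint_B; [exact: Pint_c| exact: Pint_Z].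
  move=> t _.
  have e1 := expR_ge1Dx (c - xi * X t).
  have e2 : expR (- xi * X t) = expR (- c) * expR (c - xi * X t).
    by rewrite -expRD; congr expR; ring.
  have e3 := expR_gt0 (- c).
  rewrite e2; nra.
have y_le1 : laplace P X xi <= 1.
  rewrite /laplace expect_R -[leRHS](@Rint_cst _ _ _ P).
  apply: le_Rintegral; [by [] | exact: iE | exact: Pint_c |].
  move=> t _; rewrite -expR0 ler_expR mulNr oppr_le0.
  by apply: mulr_ge0 => //; exact: ltW.
have y_pos : 0 < laplace P X xi by apply: lt_le_trans y_low; exact: expR_gt0.
have l1 : - (xi * expect P X) <= ln (laplace P X xi).
  by rewrite -[leLHS]expRK ler_ln ?posrE ?expR_gt0.
have l2 : ln (laplace P X xi) <= laplace P X xi - 1.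
  have := @le_ln1Dx _ (laplace P X xi - 1) ltac:(lra).
  by rewrite addrC subrK.
have l3 : ln (laplace P X xi) <= 0 by exact: ln_le0.
change (loglaplace P X xi) with (ln (laplace P X xi)).
set a := - ln (laplace P X xi).
set c := xi * expect P X.
set EZ := expect Q (fun t => ((Z t)%:R : R) `^ r).
have a0 : 0 <= a by rewrite /a; lra.
have ac : a <= c by rewrite /a /c; lra.
have caM : c - a <= xi `^ r * M by rewrite /a /c /M; lra.
have Z0 : forall t, 0 <= ((Z t)%:R : R) by move=> t; exact: ler0n.
have mZr : measurable_fun setT (fun t => ((Z t)%:R : R) `^ r).
  exact: (measurableT_comp (@measurable_powR R r) mZ).
have iZr : Q.-integrable setT (EFin \o (fun t => ((Z t)%:R : R) `^ r)).
  by apply: Pint_nn => // t; exact: powR_ge0.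
have iWa := iexp Q a mZ Z0 a0.
have iWc := iexp Q c mZ Z0 (le_trans a0 ac).
have pw : forall t, 0 <= expR (- a * (Z t)%:R) - expR (- c * (Z t)%:R) <=
    (c - a) * (1 + ((Z t)%:R : R) `^ r).
  move=> t; set n : R := (Z t)%:R.
  have n0 : 0 <= n := Z0 t.
  have n1 : n <= 1 + n `^ r.
    have [t1|t1] := leP n 1.
      by have := powR_ge0 n r; lra.
    have := @le1r_powR _ n r (ltW t1) (ltW hr1); lra.
  have e1 := expR_ge1Dx (- ((c - a) * n)).
  have e2 : expR (- c * n) = expR (- a * n) * expR (- ((c - a) * n)).
    by rewrite -expRD; congr expR; ring.
  have e3 : expR (- a * n) <= 1.
    rewrite -expR0 ler_expR mulNr oppr_le0; exact: mulr_ge0.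
  have e4 := expR_gt0 (- a * n).
  have e5 : 0 <= (c - a) * n by apply: mulr_ge0 => //; lra.
  have e6 : (c - a) * n <= (c - a) * (1 + n `^ r) by apply: ler_wpM2l => //; lra.
  have e7 : expR (- ((c - a) * n)) <= 1 by rewrite -expR0 ler_expR; lra.
  rewrite e2; apply/andP; split.
    have : 0 <= expR (- a * n) * (1 - expR (- ((c - a) * n))) by apply: mulr_ge0; lra.
    lra.
  have h1 : 0 <= expR (- a * n) * ((c - a) * n - (1 - expR (- ((c - a) * n)))).
    by apply: mulr_ge0; lra.
  have h2 : 0 <= (1 - expR (- a * n)) * ((c - a) * n) by apply: mulr_ge0; lra.
  nra.
have D_eq : laplace Q (fun t => (Z t)%:R) a - laplace Q (fun t => (Z t)%:R) c =
    Rintegral Q setT (fun t => expR (- a * (Z t)%:R) - expR (- c * (Z t)%:R)).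
  by rewrite /laplace !expect_R RintegralB.
have D0 : 0 <= laplace Q (fun t => (Z t)%:R) a - laplace Q (fun t => (Z t)%:R) c.
  by rewrite D_eq; apply: Rintegral_ge0 => t _; case/andP: (pw t).
have D1 : laplace Q (fun t => (Z t)%:R) a - laplace Q (fun t => (Z t)%:R) c <=
    (c - a) * (1 + EZ).
  rewrite D_eq.
  apply: (@le_trans _ _ (Rintegral Q setT (fun t => (c - a) * (1 + ((Z t)%:R : R) `^ r)))).
    apply: le_Rintegral => //.
      exact: Pint_B.
      by apply: Pint_Z; apply: Pint_D => //; exact: Pint_c.
    by move=> t _; case/andP: (pw t).
  rewrite RintegralZl //; last by apply: Pint_D => //; exact: Pint_c.
  rewrite RintegralD //; last exact: Pint_c.
  by rewrite Rint_cst.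
have EZ0 : 0 <= EZ by apply: Rintegral_ge0 => t _; exact: powR_ge0.
have xr : xi `^ r * xi `^ (- r) = 1.
  by rewrite powRN mulfV // gt_eqF // powR_gt0.
have xr0 : 0 < xi `^ (- r) by exact: powR_gt0.
have xr1 : 0 < xi `^ r by exact: powR_gt0.
rewrite ger0_norm //.
apply: (@le_trans _ _ ((xi `^ r * M * (1 + EZ)) * xi `^ (- r))).
  apply: ler_wpM2r; first exact: ltW.
  apply: (le_trans D1); apply: ler_wpM2r => //; lra.
have -> : xi `^ r * M * (1 + EZ) * xi `^ (- r) = M * (1 + EZ) * (xi `^ r * xi `^ (- r)).
  by ring.
rewrite xr mulr1; apply: ler_wpM2r; lra.
Qed.
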